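(* (a) For all $x\ge0$: $x^2=-\frac16[\sigma(x+2)-4\sigma(x+1)+3\sigma(x)-4]$ and $x=-\frac1{12}[\sigma(x+3)-5\sigma(x+2)+7\sigma(x+1)-3\sigma(x)+6]$, and for all $x,y\ge0$: $xy=-\frac1{12}[\sigma(x+y+2)-4\sigma(x+y+1)+3\sigma(x+y)-\sigma(x+2)+4\sigma(x+1)-3\sigma(x)-\sigma(y+2)+4\sigma(y+1)-3\sigma(y)+4]$, where $\sigma=\mathrm{ReLU}^3$. (b) Consequently, for every $\ell\in\mathbb N_+$ and $\mathbf i\in I^d$, the restriction of the multivariate B-spline $N^{(4)}_{\ell,\mathbf i}$ to $[0,1]^d$ is implemented exactly by a network with activations in $\{\mathrm{ReLU}^3\}$ of depth $\lceil\log_2 d\rceil+2$ and width at most $11d$.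
   Context: $\mathrm{ReLU}^3(x)=(\max\{x,0\})^3$. B-splines of order $k=4$: knots $t_{-3}=\dots=t_0=0$, $t_i=i/\ell$ ($0\le i\le\ell$), $t_\ell=\dots=t_{\ell+3}=1$; for $i\in I=\{-3,\dots,\ell-1\}$, $N^{(4)}_{\ell,i}(x)=(t_{i+4}-t_i)[t_i,\dots,t_{i+4}](x-t)_+^{3}$ (divided difference in $t$), $x\in[0,1]$, continuously modified at $x=1$; these are nonnegative $C^2$ piecewise cubics, each a linear combination of $(x-j/\ell)_+^3$ ($0\le j\le\ell$), $x^2$, $x$ and $1$ on $[0,1]$. Multivariate: $N^{(4)}_{\ell,\mathbf i}(\mathbf x)=\prod_{j=1}^dN^{(4)}_{\ell,i_j}(x_j)$. A network of depth $\mathcal D$, width $\mathcal W$, activations in $\Phi$ computes $f_0=x$, $(f_\ell)_i=\rho^{(\ell)}_i((A_\ell f_{\ell-1}+b_\ell)_i)$ for $\ell=1,\dots,\mathcal D-1$ ($\rho^{(\ell)}_i\in\Phi$), output $A_{\mathcal D}f_{\mathcal D-1}+b_{\mathcal D}$, with all layer sizes $\le\mathcal W$. *)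

(* Defs.v *)
From HB Require Import structures.
From mathcomp Require Import all_boot all_order all_algebra.
From mathcomp Require Import all_classical all_reals all_analysis.
Set Implicit Arguments. Unset Strict Implicit. Unset Printing Implicit Defensive.
Import Order.TTheory GRing.Theory Num.Theory.
Import numFieldNormedType.Exports.
Local Open Scope ring_scope.

Section Defs.
Variable R : realType.

Definition relu3 (x : R) : R := (Num.max x 0) ^+ 3.

Definition knot (l : nat) (j : int) : R :=
  if (j <= 0)%R then 0 else if (l%:Z <= j)%R then 1 else j%:~R / l%:R.

(* divided difference [t_a, ..., t_{a+n}] g for a nondecreasing knot sequence
   t, with the usual confluent convention g^(n)(t_a)/n! when t_a = t_{a+n}. *)
Fixpoint divdiff (g : R -> R) (t : int -> R) (a : int) (n : nat) : R :=
  match n with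
  | 0 => g (t a)
  | n'.+1 =>
      if t (a + n%:Z) == t a then derive1n n g (t a) / (n`!)%:R
      else (divdiff g t (a + 1) n' - divdiff g t a n') / (t (a + n%:Z) - t a)
  end.

Definition bspline4_raw (l : nat) (i : int) (x : R) : R :=
  (knot l (i + 4) - knot l i) * divdiff (fun t => relu3 (x - t)) (knot l) i 4.

(* on [0,1]: raw formula on (0,1), continuously extended at the endpoints *)
Definition bspline4 (l : nat) (i : int) (x : R) : R :=
  if x == 0 then lim ((bspline4_raw l i) @ at_right 0)%classic
  else if x == 1 then lim ((bspline4_raw l i) @ at_left 1)%classic
  else bspline4_raw l i x.

Definition bspline4_multi (d l : nat) (ii : 'I_d -> int) (x : 'I_d -> R) : R :=
  \prod_(j < d) bspline4 l (ii j) (x j).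

Inductive net : nat -> nat -> Type :=
| Out (n m : nat) (A : 'M[R]_(m, n)) (b : 'cV[R]_m) : net n m
| Hidden (n k m : nat) (A : 'M[R]_(k, n)) (b : 'cV[R]_k)
    (rho : 'I_k -> R -> R) (rest : net k m) : net n m.

Fixpoint net_eval n m (N : net n m) : 'cV[R]_n -> 'cV[R]_m :=
  match N with
  | Out _ _ A b => fun x => A *m x + b
  | Hidden _ k _ A b rho rest =>
      fun x => net_eval rest (\col_i rho i ((A *m x + b) i 0))
  end.

Fixpoint net_depth n m (N : net n m) : nat :=
  match N with
  | Out _ _ _ _ => 1
  | Hidden _ _ _ _ _ _ rest => (net_depth rest).+1
  end.

Fixpoint net_width_le (W : nat) n m (N : net n m) : Prop :=
  match N with
  | Out n m _ _ => (n <= W)%N /\ (m <= W)%N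
  | Hidden n _ _ _ _ _ rest => (n <= W)%N /\ net_width_le W rest
  end.

Fixpoint net_acts_in (Phi : (R -> R) -> Prop) n m (N : net n m) : Prop :=
  match N with
  | Out _ _ _ _ => True
  | Hidden _ _ _ _ _ rho rest => (forall i, Phi (rho i)) /\ net_acts_in Phi rest
  end.

End Defs.

(* Main.v *)
Require Import Defs.
From HB Require Import structures.
From mathcomp Require Import all_boot all_order all_algebra.
From mathcomp Require Import all_classical all_reals all_analysis.
From mathcomp Require Import ring lra zify.
Set Implicit Arguments. Unset Strict Implicit. Unset Printing Implicit Defensive.
Import Order.TTheory GRing.Theory Num.Theory.
Import numFieldNormedType.Exports.
Local Open Scope ring_scope.


Lemma relu3_ge0 (R : realType) (x : R) : 0 <= x -> relu3 x = x ^+ 3.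
Proof. by move=> hx; rewrite /relu3 max_l. Qed.

Lemma relu3_le0 (R : realType) (x : R) : x <= 0 -> relu3 x = 0.
Proof. by move=> hx; rewrite /relu3 max_r // expr0n. Qed.

Lemma relu3N (R : realType) (x : R) : relu3 (- x) = relu3 x - x ^+ 3.
Proof.
case: (lerP 0 x) => hx.
  rewrite (relu3_ge0 hx) (@relu3_le0 _ (-x)); [ring|lra].
rewrite (@relu3_le0 _ x) ?(@relu3_ge0 _ (-x)); [ring|lra|lra].
Qed.

Definition ext (R : realType) (d : nat) (v : nat -> R) (n : nat) : R :=
  if (n < d)%N then v n else 1.

Fixpoint Qp (R : realType) (d e : nat) (v : nat -> R) : R :=
  match e with
  | 0 => ext d v 0
  | e'.+1 => Qp d e' (fun n => ext d v n.*2 * ext d v n.*2.+1)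
  end.

Lemma pairprod (R : realType) (f : nat -> R) n :
  \prod_(0 <= j < n) (f j.*2 * f j.*2.+1) = \prod_(0 <= j < n.*2) f j.
Proof.
elim: n => [|n IH]; first by rewrite !big_geq.
rewrite big_nat_recr //= IH doubleS [in RHS]big_nat_recr //= [in RHS]big_nat_recr //=.
by rewrite mulrA.
Qed.

Lemma QpE (R : realType) d e (v : nat -> R) :
  Qp d e v = \prod_(0 <= j < 2 ^ e) ext d v j.
Proof.
elim: e v => [|e IH] v /=; first by rewrite expn0 big_nat1.
rewrite IH expnS mul2n -pairprod; apply: eq_bigr => j _.
rewrite {1}/ext; case: ltnP => // hj.
rewrite /ext ifF; last by apply/negbTE; rewrite -leqNgt; lia.
by rewrite ifF ?mulr1 //; apply/negbTE; rewrite -leqNgt; lia.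
Qed.

Lemma QpP (R : realType) d e (v : nat -> R) : (d <= 2 ^ e)%N ->
  Qp d e v = \prod_(j < d) v j.
Proof.
move=> hd; rewrite QpE (@big_cat_nat _ _ _ d) /=; [|by []|by []].
have -> : \prod_(d <= j < 2 ^ e) ext d v j = 1.
  rewrite big_nat_cond big1 // => j /andP[/andP[hj _] _].
  by rewrite /ext ifF //; apply/negbTE; rewrite -leqNgt.
rewrite mulr1 -(big_mkord xpredT); apply: eq_big_nat => j /andP[_ hj].
by rewrite /ext hj.
Qed.


Lemma sum_divmod (R : realType) (m d : nat) (F : nat -> R) :
  \sum_(k < m * d) F k = \sum_(q < m) \sum_(j < d) F (q * d + j)%N.
Proof.
elim: m => [|m IH]; first by rewrite mul0n !big_ord0.
rewrite mulSnr -(big_mkord xpredT) (@big_cat_nat _ _ _ (m * d)) /=; [|by []|by lia].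
rewrite big_mkord IH big_ord_recr /=; congr (_ + _).
rewrite -{1}(add0n (m * d)%N) big_addn addKn big_mkord.
by apply: eq_bigr => j _; rewrite addnC.
Qed.

Lemma sum_ind (R : realType) (d : nat) (g : nat -> R) (n : nat) :
  \sum_(j < d) ((j : nat) == n)%:R * g j = if (n < d)%N then g n else 0.
Proof.
case: ltnP => hn.
  rewrite (bigD1 (Ordinal hn)) //= eqxx mul1r big1 ?addr0 // => j hj.
  suff -> : ((j : nat) == n) = false by rewrite mul0r.
  apply/negbTE; apply: contra hj => /eqP hj.
  by apply/eqP; apply: val_inj.
rewrite big1 // => j _.
suff -> : ((j : nat) == n) = false by rewrite mul0r.
by apply/negbTE/eqP => hj; move: (ltn_ord j); rewrite hj ltnNge hn.
Qed.

Definition sgo (R : realType) (q : nat) : R := if odd q then -1 else 1.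
Definition sgb (R : realType) (q : nat) : R := if (q < 4)%N then 1 else -1.
Definition ee (R : realType) (q : nat) : R := if (q %% 4 < 2)%N then 1 else -1.
Definition wq (R : realType) (q : nat) : R := sgo R q * sgb R q * ee R q / 24%:R.

Lemma prod8 (R : realType) (a b : R) :
  \sum_(q < 8) wq R q * relu3 (sgo R q * (a + sgb R q * b + ee R q)) = a * b.
Proof.
rewrite !big_ord_recr big_ord0 /= /wq /sgo /sgb /ee /=.
rewrite !mulN1r !mul1r !relu3N.
have H : (24%:R : R) != 0 by rewrite pnatr_eq0.
by field.
Qed.

Definition Pm (R : realType) (d : nat) : 'M[R]_(8 * d, d) :=
  \matrix_(k, j) (sgo R (k %/ d) * (((j : nat) == (k %% d).*2)%:R
                    + sgb R (k %/ d) * ((j : nat) == (k %% d).*2.+1)%:R)).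
Definition bPm (R : realType) (d : nat) : 'cV[R]_(8 * d) :=
  \col_k (sgo R (k %/ d) * ((d <= (k %% d).*2)%N%:R
          + sgb R (k %/ d) * (d <= (k %% d).*2.+1)%N%:R + ee R (k %/ d))).
Definition Dp (R : realType) (d : nat) : 'M[R]_(d, 8 * d) :=
  \matrix_(s, k) (((k %% d)%N == s)%:R * wq R (k %/ d)).

Fixpoint build (R : realType) (d' e : nat) :
  forall K, 'M[R]_(d'.+1, K) -> 'cV[R]_(d'.+1) -> net R K 1 :=
  match e with
  | 0 => fun K D bD => Out (\matrix_(a < 1, k < K) D ord0 k) (\col_(a < 1) bD ord0 0)
  | e'.+1 => fun K D bD =>
      Hidden (Pm R d'.+1 *m D) (Pm R d'.+1 *m bD + bPm R d'.+1) (fun _ => @relu3 R)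
        (@build R d' e' _ (Dp R d'.+1) 0)
  end.

Lemma ext_split (R : realType) d (v : nat -> R) n :
  ext d v n = (if (n < d)%N then v n else 0) + (d <= n)%N%:R.
Proof. rewrite /ext; case: (ltnP n d) => h /=. by rewrite addr0. by rewrite add0r. Qed.

Lemma pre_prod (R : realType) d (c : 'cV[R]_d) (v : nat -> R) :
  (forall s : 'I_d, c s 0 = v s) ->
  forall k : 'I_(8 * d),
  (Pm R d *m c + bPm R d) k 0 =
  sgo R (k %/ d) * (ext d v (k %% d).*2 + sgb R (k %/ d) * ext d v (k %% d).*2.+1
                    + ee R (k %/ d)).
Proof.
move=> hc k; rewrite !mxE.
have E : forall j : 'I_d, Pm R d k j * c j 0 =
   sgo R (k %/ d) * (((j : nat) == (k %% d).*2)%:R * v j)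
   + sgo R (k %/ d) * sgb R (k %/ d) * (((j : nat) == (k %% d).*2.+1)%:R * v j).
  by move=> j; rewrite mxE hc; ring.
rewrite (eq_bigr _ (fun j _ => E j)) big_split /= -!mulr_sumr !sum_ind !ext_split.
ring.
Qed.

Lemma prodlayer (R : realType) d (c : 'cV[R]_d) (v : nat -> R) :
  (forall s : 'I_d, c s 0 = v s) ->
  forall s : 'I_d,
  (Dp R d *m \col_k relu3 ((Pm R d *m c + bPm R d) k 0)) s 0
   = ext d v (s : nat).*2 * ext d v (s : nat).*2.+1.
Proof.
move=> hc s; rewrite mxE.
have hd : (0 < d)%N by apply: leq_ltn_trans (ltn_ord s).
under eq_bigr => k _ do rewrite mxE [X in _ * X]mxE (pre_prod hc).
rewrite (@sum_divmod R 8 d (fun k => ((k %% d)%N == s)%:R * wq R (k %/ d) *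
   relu3 (sgo R (k %/ d) * (ext d v (k %% d).*2 + sgb R (k %/ d) * ext d v (k %% d).*2.+1
                    + ee R (k %/ d))))).
rewrite -[RHS]prod8; apply: eq_bigr => q _.
under eq_bigr => j _ do rewrite divnMDl // modnMDl divn_small // modn_small // addn0 -mulrA.
rewrite (@sum_ind R d (fun j => wq R q *
      relu3 (sgo R q * (ext d v j.*2 + sgb R q * ext d v j.*2.+1 + ee R q))) s).
by rewrite ltn_ord.
Qed.

Lemma build_spec (R : realType) d' e :
  forall K (D : 'M[R]_(d'.+1, K)) (bD : 'cV[R]_(d'.+1)) (y : 'cV[R]_K) (v : nat -> R),
  (forall s : 'I_d'.+1, (D *m y + bD) s 0 = v s) ->
  net_eval (@build R d' e K D bD) y 0 0 = Qp d'.+1 e v.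
Proof.
elim: e => [|e IH] K D bD y v hv /=.
  rewrite /ext /= -(hv ord0) !mxE; congr (_ + _); apply: eq_bigr => k _.
  by rewrite !mxE.
apply: IH => s; rewrite addr0.
have -> : Pm R d'.+1 *m D *m y + (Pm R d'.+1 *m bD + bPm R d'.+1)
        = Pm R d'.+1 *m (D *m y + bD) + bPm R d'.+1.
  by rewrite mulmxDr mulmxA addrA.
exact: prodlayer hv s.
Qed.

Lemma build_depth (R : realType) d' e K (D : 'M[R]_(d'.+1, K)) bD :
  net_depth (@build R d' e K D bD) = e.+1.
Proof. by elim: e K D bD => [|e IH] K D bD //=; rewrite IH. Qed.

Lemma build_width (R : realType) d' e W K (D : 'M[R]_(d'.+1, K)) bD :
  (K <= W)%N -> (8 * d'.+1 <= W)%N -> (1 <= W)%N ->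
  net_width_le W (@build R d' e K D bD).
Proof.
elim: e K D bD => [|e IH] K D bD hK h8 h1 /=; first by split.
by split => //; apply: IH.
Qed.

Lemma build_acts (R : realType) d' e K (D : 'M[R]_(d'.+1, K)) bD :
  net_acts_in (fun rho => rho = @relu3 R) (@build R d' e K D bD).
Proof. by elim: e K D bD => [|e IH] K D bD //=; split. Qed.




Lemma knot_eq01 (R : realType) (l : nat) (a : int) (n : nat) : (0 < l)%N -> (0 < n)%N ->
  knot R l (a + n%:Z) = knot R l a -> knot R l a = 0 \/ knot R l a = 1.
Proof.
move=> hl hn; rewrite /knot.
case: (lerP a 0) => ha; first by left.
case: (lerP (l%:Z) a) => hla; first by right.
have hL : (0 : R) < l%:R by rewrite ltr0n.
have han : ~~ (a + n%:Z <= 0) by rewrite -ltNge; apply: ltr_wpDr.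
rewrite (negbTE han).
move=> E; exfalso.
have hal : (a%:~R : R) < l%:R by rewrite -[l%:R]/((l%:Z)%:~R : R) ltr_int.
case: (lerP (l%:Z) (a + n%:Z)) E => _ E.
  move: E => /(congr1 (fun z => z * l%:R)); rewrite mul1r divfK ?gt_eqF // => E.
  by move: hal; rewrite -[X in _ < X]/(l%:R : R) -E ltxx.
move: E => /(congr1 (fun z => z * l%:R)); rewrite !divfK ?gt_eqF //.
move/eqP; rewrite intrD -subr_eq0 addrAC subrr add0r pnatr_eq0 => /eqP hn0.
by move: hn; rewrite hn0.
Qed.

Definition Phi (R : realType) (l : nat) (i : int) (c p : nat -> R) (x : R) : R :=
  \sum_(m < 5) c m * relu3 (x - knot R l (i + (m : nat)%:Z)) + \sum_(k < 4) p k * x ^+ k.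

Lemma Phi_lin (R : realType) l i (c1 p1 c2 p2 : nat -> R) (al be : R) x :
  Phi l i (fun m => al * c1 m + be * c2 m) (fun k => al * p1 k + be * p2 k) x
  = al * Phi l i c1 p1 x + be * Phi l i c2 p2 x.
Proof.
rewrite /Phi.
have E1 : forall (F G : nat -> R) N,
    \sum_(m < N) (al * F m + be * G m) = al * \sum_(m < N) F m + be * \sum_(m < N) G m.
  by move=> F G N; rewrite !mulr_sumr -big_split.
rewrite (eq_bigr (fun m : 'I_5 => al * (c1 m * relu3 (x - knot R l (i + (m : nat)%:Z)))
    + be * (c2 m * relu3 (x - knot R l (i + (m : nat)%:Z))))); last by move=> m _; ring.
rewrite [X in _ + X](eq_bigr (fun m : 'I_4 => al * (p1 m * x ^+ m) + be * (p2 m * x ^+ m)));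
  last by move=> m _; ring.
rewrite (E1 (fun m => c1 m * relu3 (x - knot R l (i + m%:Z))) (fun m => c2 m * relu3 (x - knot R l (i + m%:Z))) 5).
rewrite (E1 (fun m => p1 m * x ^+ m) (fun m => p2 m * x ^+ m) 4).
ring.
Qed.

Lemma Phi_single (R : realType) l i (m0 : nat) (x : R) : (m0 < 5)%N ->
  Phi l i (fun m => (m == m0)%:R) (fun _ => 0) x = relu3 (x - knot R l (i + m0%:Z)).
Proof.
move=> hm; rewrite /Phi [X in _ + X]big1 ?addr0; last by move=> k _; rewrite mul0r.
by rewrite (@sum_ind R 5 (fun m => relu3 (x - knot R l (i + m%:Z))) m0) hm.
Qed.

Lemma Phi_zero (R : realType) l i (x : R) : Phi l i (fun _ => 0) (fun _ => 0) x = 0.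
Proof. by rewrite /Phi !big1 ?addr0 // => k _; rewrite mul0r. Qed.

Lemma near_derive1n (R : realType) (f h : R -> R) (t0 : R) k :
  (\forall t \near t0, f t = h t) -> derive1n k f t0 = derive1n k h t0.
Proof.
move=> H.
suff : \forall t \near t0, derive1n k f t = derive1n k h t by move/nbhs_singleton.
elim: k => [|k IH] //.
move: IH => /near_join; apply: filterS => t Ht.
rewrite !derive1nS !derive1E; exact: near_eq_derive.
Qed.

Lemma derive1n_horner (R : realType) (P : {poly R}) k :
  derive1n k (horner P) = horner (P^`(k)).
Proof.
elim: k => [|k IH]; first by rewrite derivn0.
by rewrite derive1nS IH -derivE derivnS.
Qed.

Lemma derive1n_cst0 (R : realType) k : derive1n k (fun _ : R => (0 : R)) = fun _ => 0.
Proof.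
elim: k => [|k IH] //; rewrite derive1nS IH.
by apply/funext => t; rewrite (derive1_cst (0 : R^o)).
Qed.

Definition cfP (R : realType) (k j : nat) : R :=
  ((k == 0%N) && (j == 3%N))%:R - 3%:R * ((k == 1%N) && (j == 2%N))%:R
  + 3%:R * ((k == 2%N) && (j == 1%N))%:R - ((k == 3%N) && (j == 0%N))%:R.

Lemma coefP (R : realType) (x : R) k :
  ((x%:P - 'X) ^+ 3)`_k = \sum_(j < 4) cfP R k j * x ^+ j.
Proof.
have -> : (x%:P - 'X) ^+ 3 = (x ^+ 3)%:P - (3%:R * x ^+ 2)%:P * 'X
           + (3%:R * x)%:P * 'X ^+ 2 - 'X ^+ 3.
  by rewrite !polyCM polyC_natr; ring.
rewrite !big_ord_recr big_ord0 /= /cfP.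
rewrite !(coefB, coefD, coefN, coefCM, coefC, coefX, coefXn).
case: k => [|[|[|[|k]]]] /=; ring.
Qed.

Lemma rep_dd (R : realType) (l : nat) (i : int) : (0 < l)%N ->
  forall n m, (m + n <= 4)%N -> exists c p : nat -> R, forall x : R, 0 < x < 1 ->
    divdiff (fun t => relu3 (x - t)) (knot R l) (i + m%:Z) n = Phi l i c p x.
Proof.
move=> hl; elim=> [|n IH] m hmn.
  exists (fun m' => (m' == m)%:R), (fun _ => 0) => x hx /=.
  by rewrite Phi_single //; lia.
have [c1 [p1 H1]] := IH m.+1 ltac:(lia).
have [c2 [p2 H2]] := IH m ltac:(lia).
rewrite /=.
set a := i + m%:Z.
case: eqP => E.
  have [h0|h1] := knot_eq01 hl (ltn0Sn n) E.
    exists (fun _ => 0), (fun j => cfP R n.+1 j) => x /andP[hx0 hx1].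
    rewrite h0.
    have Hn : \forall t \near (0 : R), relu3 (x - t) = ((x%:P - 'X) ^+ 3).[t].
      move: (lt_nbhsl hx0); apply: filterS => t ht.
      by rewrite relu3_ge0 ?subr_ge0 ?ltW // !hornerE.
    rewrite -derive1nS (near_derive1n _ Hn) derive1n_horner horner_coef0 coef_derivn addn0 ffactnn.
    rewrite -[_ *+ (n.+1)`!]mulr_natr mulfK ?pnatr_eq0 -?lt0n ?fact_gt0 // coefP /Phi.
    by rewrite [X in _ = X + _]big1 ?add0r // => k _; rewrite mul0r.
  exists (fun _ => 0), (fun _ => 0) => x /andP[hx0 hx1].
  rewrite h1 Phi_zero.
  have Hn : \forall t \near (1 : R), relu3 (x - t) = (fun _ => 0) t.
    move: (lt_nbhsr hx1); apply: filterS => t ht.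
    by rewrite relu3_le0 // subr_le0 ltW.
  by rewrite -derive1nS (near_derive1n _ Hn) derive1n_cst0 mul0r.
set del := knot R l (a + n.+1%:Z) - knot R l a.
exists (fun m => del^-1 * c1 m + (- del^-1) * c2 m),
       (fun k => del^-1 * p1 k + (- del^-1) * p2 k) => x hx.
rewrite Phi_lin -(H1 x hx) -(H2 x hx).
have -> : a + 1 = i + m.+1%:Z by rewrite /a -addrA -[in RHS](addn1 m) PoszD.
rewrite /del; ring.
Qed.

Lemma relu3_cont (R : realType) : continuous (@relu3 R).
Proof.
move=> y; rewrite /relu3.
apply: (@continuous_comp _ _ _ (fun z : R => Num.max z 0) (fun z : R => z ^+ 3)).
  apply: (@continuous_max _ _ id (cst 0)); [exact: cvg_id|exact: cvg_cst].
exact: exprn_continuous.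
Qed.

Lemma cont_mulc (R : realType) (f : R -> R) (a : R) :
  continuous f -> continuous (fun z => a * f z).
Proof.
move=> hf z.
have H : {for z, continuous (fun _ : R => a)} by exact: cvg_cst.
exact: (continuousM H (hf z)).
Qed.

Lemma Phi_cont (R : realType) l i (c p : nat -> R) : continuous (Phi l i c p).
Proof.
move=> y; rewrite /Phi.
apply: continuousD.
  apply: (@continuous_big _ _ +%R 0 xpredT add_continuous _ _
     (fun (m : 'I_5) (z : R) => c m * relu3 (z - knot R l (i + (m : nat)%:Z)))) => m _.
  apply: cont_mulc => z.
  apply: (@continuous_comp _ _ _ (fun z : R => z - knot R l (i + (m : nat)%:Z)) (@relu3 R)).
    by apply: continuousB; [exact: cvg_id|exact: cvg_cst].
  exact: relu3_cont.
apply: (@continuous_big _ _ +%R 0 xpredT add_continuous _ _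
   (fun (k : 'I_4) (z : R) => p k * z ^+ k)) => k _.
apply: cont_mulc; exact: exprn_continuous.
Qed.

Lemma rep_bspline (R : realType) (l : nat) (i : int) : (0 < l)%N ->
  exists c p : nat -> R, forall x : R, 0 <= x <= 1 -> bspline4 l i x = Phi l i c p x.
Proof.
move=> hl.
have [c0 [p0 H0]] := @rep_dd R l i hl 4 0 isT.
set ka := knot R l (i + 4) - knot R l i.
exists (fun m => ka * c0 m + 0 * 0), (fun k => ka * p0 k + 0 * 0).
have Hraw : forall y : R, 0 < y < 1 -> bspline4_raw l i y =
    Phi l i (fun m => ka * c0 m + 0 * 0) (fun k => ka * p0 k + 0 * 0) y.
  move=> y hy; rewrite Phi_lin Phi_zero mulr0 addr0 -(H0 y hy) addr0.
  by rewrite /bspline4_raw.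
move=> x /andP[hx0 hx1]; rewrite /bspline4.
case: eqP => [->|/eqP x0].
  apply: cvg_lim; first exact: Rhausdorff.
  apply: cvg_trans (cvg_at_right_filter (@Phi_cont R l i _ _ 0)).
  apply: near_eq_cvg; near=> y; rewrite Hraw //; apply/andP; split.
    by near: y; exact: nbhs_right_gt.
  by near: y; exact: nbhs_right_lt.
case: eqP => [->|/eqP x1].
  apply: cvg_lim; first exact: Rhausdorff.
  apply: cvg_trans (cvg_at_left_filter (@Phi_cont R l i _ _ 1)).
  apply: near_eq_cvg; near=> y; rewrite Hraw //; apply/andP; split.
    by near: y; exact: nbhs_left_gt.
  by near: y; exact: nbhs_left_lt.
apply: Hraw; apply/andP; split; rewrite lt_neqAle; apply/andP; split => //.
  by rewrite eq_sym.
Unshelve. all: by end_near.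
Qed.


Definition Wc (R : realType) (c p : nat -> R) (q : nat) : R :=
  if (q < 5)%N then c q
  else if q == 5%N then p 3%N - p 2%N / 2%:R + p 1%N / 4%:R
  else if q == 6%N then 2%:R / 3%:R * p 2%N - 7%:R / 12%:R * p 1%N
  else if q == 7%N then - p 2%N / 6%:R + 5%:R / 12%:R * p 1%N
  else - p 1%N / 12%:R.

Definition Bc (R : realType) (p : nat -> R) : R :=
  p 0%N + 2%:R / 3%:R * p 2%N - p 1%N / 2%:R.

Definition bbi (R : realType) (l : nat) (i : int) (q : nat) : R :=
  if (q < 5)%N then - knot R l (i + q%:Z) else (q - 5)%:R.

Lemma decode1 (R : realType) l i (c p : nat -> R) (x : R) : 0 <= x ->
  \sum_(q < 9) Wc c p q * relu3 (x + bbi R l i q) + Bc p = Phi l i c p x.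
Proof.
move=> hx.
have hq : forall n : nat, relu3 (x + n%:R) = (x + n%:R) ^+ 3.
  by move=> n; rewrite relu3_ge0 // addr_ge0.
rewrite /Phi !big_ord_recr !big_ord0 /= /Wc /bbi /Bc /=.
rewrite !hq.
have H2 : (2%:R : R) != 0 by rewrite pnatr_eq0.
have H3 : (3%:R : R) != 0 by rewrite pnatr_eq0.
have H4 : (4%:R : R) != 0 by rewrite pnatr_eq0.
have H6 : (6%:R : R) != 0 by rewrite pnatr_eq0.
have H12 : (12%:R : R) != 0 by rewrite pnatr_eq0.
rewrite (_ : (5 - 5)%N = 0%N) // (_ : (6 - 5)%N = 1%N) // (_ : (7 - 5)%N = 2%N) // (_ : (8 - 5)%N = 3%N) //.
by field.
Qed.

Lemma sum_ind_ord (R : realType) (d' : nat) (F : 'I_d'.+1 -> R) (n : nat) :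
  \sum_(j < d'.+1) ((j : nat) == n)%:R * F j = if (n < d'.+1)%N then F (inord n) else 0.
Proof.
rewrite -(@sum_ind R d'.+1 (fun n => F (inord n))); apply: eq_bigr => j _.
by rewrite inord_val.
Qed.

Definition A1 (R : realType) (d : nat) : 'M[R]_(9 * d, d) :=
  \matrix_(k, j) ((j : nat) == (k %% d)%N)%:R.
Definition b1 (R : realType) (l d' : nat) (ii : 'I_d'.+1 -> int) : 'cV[R]_(9 * d'.+1) :=
  \col_k bbi R l (ii (inord (k %% d'.+1))) (k %/ d'.+1).
Definition D1 (R : realType) (d' : nat) (cp : 'I_d'.+1 -> (nat -> R) * (nat -> R)) :
  'M[R]_(d'.+1, 9 * d'.+1) :=
  \matrix_(s, k) (((k %% d'.+1)%N == s)%:R * Wc (cp s).1 (cp s).2 (k %/ d'.+1)).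
Definition bD1 (R : realType) (d' : nat) (cp : 'I_d'.+1 -> (nat -> R) * (nat -> R)) :
  'cV[R]_(d'.+1) := \col_s Bc (cp s).2.

Lemma layer1 (R : realType) l d' (ii : 'I_d'.+1 -> int) cp (x : 'I_d'.+1 -> R) :
  (forall j, 0 <= x j) ->
  forall s : 'I_d'.+1,
  (D1 cp *m (\col_k relu3 ((A1 R d'.+1 *m (\col_j x j) + b1 R l ii) k 0)) + bD1 cp) s 0
  = Phi l (ii s) (cp s).1 (cp s).2 (x s).
Proof.
move=> hx s.
have pre : forall k : 'I_(9 * d'.+1), (A1 R d'.+1 *m \col_j x j + b1 R l ii) k 0
   = x (inord (k %% d'.+1)) + bbi R l (ii (inord (k %% d'.+1))) (k %/ d'.+1).
  move=> k; rewrite !mxE; congr (_ + _).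
  under eq_bigr => j _ do rewrite !mxE.
  by rewrite sum_ind_ord ltn_pmod.
rewrite !mxE -(decode1 l (ii s) (cp s).1 (cp s).2 (hx s)); congr (_ + _).
under eq_bigr => k _ do rewrite mxE [X in _ * X]mxE pre.
rewrite (@sum_divmod R 9 d'.+1 (fun k => ((k %% d'.+1)%N == s)%:R * Wc (cp s).1 (cp s).2 (k %/ d'.+1)
   * relu3 (x (inord (k %% d'.+1)) + bbi R l (ii (inord (k %% d'.+1))) (k %/ d'.+1)))).
apply: eq_bigr => q _.
under eq_bigr => j _ do rewrite divnMDl // modnMDl divn_small // modn_small // addn0 -mulrA.
rewrite (@sum_ind R d'.+1 (fun j => Wc (cp s).1 (cp s).2 q *
    relu3 (x (inord j) + bbi R l (ii (inord j)) q)) s).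
by rewrite ltn_ord inord_val.
Qed.

Lemma partA (R : realType) :
  ((forall x : R, 0 <= x ->
      x ^+ 2 = - (6%:R)^-1 * (relu3 (x + 2) - 4%:R * relu3 (x + 1)
                               + 3%:R * relu3 x - 4%:R))
   /\ (forall x : R, 0 <= x ->
      x = - (12%:R)^-1 * (relu3 (x + 3) - 5%:R * relu3 (x + 2)
                          + 7%:R * relu3 (x + 1) - 3%:R * relu3 x + 6%:R))
   /\ (forall x y : R, 0 <= x -> 0 <= y ->
      x * y = - (12%:R)^-1 *
        (relu3 (x + y + 2) - 4%:R * relu3 (x + y + 1) + 3%:R * relu3 (x + y)
         - relu3 (x + 2) + 4%:R * relu3 (x + 1) - 3%:R * relu3 x
         - relu3 (y + 2) + 4%:R * relu3 (y + 1) - 3%:R * relu3 y + 4%:R))).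
Proof.
have H6 : (6%:R : R) != 0 by rewrite pnatr_eq0.
have H12 : (12%:R : R) != 0 by rewrite pnatr_eq0.
split; [|split].
{ move=> x hx; rewrite !relu3_ge0; try lra; field; done. }
{ move=> x hx; rewrite !relu3_ge0; try lra; field; done. }
{ move=> x y hx hy; rewrite !relu3_ge0; try lra; field; done. }
Qed.

Theorem mainTheorem8 (R : realType) :
  ((forall x : R, 0 <= x ->
      x ^+ 2 = - (6%:R)^-1 * (relu3 (x + 2) - 4%:R * relu3 (x + 1)
                               + 3%:R * relu3 x - 4%:R))
   /\ (forall x : R, 0 <= x ->
      x = - (12%:R)^-1 * (relu3 (x + 3) - 5%:R * relu3 (x + 2)
                          + 7%:R * relu3 (x + 1) - 3%:R * relu3 x + 6%:R))
   /\ (forall x y : R, 0 <= x -> 0 <= y ->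
      x * y = - (12%:R)^-1 *
        (relu3 (x + y + 2) - 4%:R * relu3 (x + y + 1) + 3%:R * relu3 (x + y)
         - relu3 (x + 2) + 4%:R * relu3 (x + 1) - 3%:R * relu3 x
         - relu3 (y + 2) + 4%:R * relu3 (y + 1) - 3%:R * relu3 y + 4%:R)))
  /\
  (forall (l d : nat) (ii : 'I_d -> int),
     (0 < l)%N -> (0 < d)%N ->
     (forall j, -3 <= ii j <= l%:Z - 1) ->
     exists N : net R d 1,
       net_depth N = (up_log 2 d + 2)%N /\
       net_width_le (11 * d) N /\
       net_acts_in (fun rho => rho = @relu3 R) N /\
       forall x : 'I_d -> R, (forall j, 0 <= x j <= 1) ->
         net_eval N (\col_j x j) 0 0 = bspline4_multi l ii x).

Proof.
split; first exact: partA.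
move=> l d ii hl hd hii.
have H : forall j : 'I_d, exists cp : (nat -> R) * (nat -> R),
    forall x : R, 0 <= x <= 1 -> bspline4 l (ii j) x = Phi l (ii j) cp.1 cp.2 x.
  by move=> j; have [c [p Hcp]] := @rep_bspline R l (ii j) hl; exists (c, p).
have [cp Hcp] := choice H.
move: ii hd hii cp Hcp {H}; case: d => [//|d'] ii _ hii cp Hcp.
set e := up_log 2 d'.+1.
exists (Hidden (A1 R d'.+1) (b1 R l ii) (fun _ => @relu3 R) (@build R d' e _ (D1 cp) (bD1 cp))).
split; first by rewrite /= build_depth addn2.
split; first by split; [lia | apply: build_width; lia].
split; first by split => //; exact: build_acts.
move=> x hx /=.
rewrite (@build_spec R d' e _ (D1 cp) (bD1 cp) _ (fun n => bspline4 l (ii (inord n)) (x (inord n)))).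
  rewrite QpP; last exact: up_logP.
  by rewrite /bspline4_multi; apply: eq_bigr => j _; rewrite inord_val.
move=> s; rewrite layer1; last by move=> j; case/andP: (hx j).
by rewrite inord_val Hcp.
Qed.
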